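(* Let $U$ be a unitary on $\mathcal H=\mathcal H_A\otimes\mathcal H_V$ with an orthonormal eigenbasis $|\phi_i\rangle$, $U|\phi_i\rangle=\lambda_i|\phi_i\rangle$. For every unit vector $|\beta_0\rangle=\sum_ia_i|\phi_i\rangle$ and every positive integer $T$, \[\|\bar P_T(\cdot|\beta_0)-\pi(\cdot|\beta_0)\|\le 2\sum_{i,j:\ \lambda_i\ne\lambda_j}\frac{|a_i|^2}{T\,|\lambda_i-\lambda_j|}.\]
   Context: $\mathcal H_V$ has orthonormal basis $\{|v\rangle:v\in V\}$ ($V$ finite), $\mathcal H_A$ has basis $|1\rangle,\dots,|d\rangle$. $P_t(v|\beta_0)=\sum_a|\langle a,v|U^t\beta_0\rangle|^2$, $\bar P_T(v|\beta_0)=\frac1T\sum_{t=0}^{T-1}P_t(v|\beta_0)$, $\pi(v|\beta_0)=\lim_{T\to\infty}\bar P_T(v|\beta_0)$. Total variation distance $\|d_1-d_2\|=\sum_{v\in V}|d_1(v)-d_2(v)|$. *)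

(* Defs.v *)
From HB Require Import structures.
From mathcomp Require Import all_boot all_order all_algebra.
From mathcomp Require Import all_classical all_reals all_analysis.
From mathcomp Require Import complex.
Set Implicit Arguments. Unset Strict Implicit. Unset Printing Implicit Defensive.
Import Order.TTheory GRing.Theory Num.Theory numFieldNormedType.Exports.
Local Open Scope ring_scope.
Local Open Scope classical_set_scope.

Definition cmod (R : realType) (z : R[i]) : R := Num.sqrt (complex.Re z ^+ 2 + complex.Im z ^+ 2).

Section QW.
Variables (R : realType) (d : nat) (V : finType).
(* basis index of H = H_A (x) H_V : pairs (a, v), a : 'I_d, v : V *)
Local Notation S := ('I_d * V)%type.
Local Notation vec := (S -> R[i]).
Local Notation op := (S -> S -> R[i]).

Definition applyOp (U : op) (x : vec) : vec := fun s => \sum_(t : S) U s t * x t.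
Definition iterOp (U : op) (t : nat) (x : vec) : vec := iter t (applyOp U) x.
Definition cdot (x y : vec) : R[i] := \sum_(s : S) (conjc (x s)) * y s.
Definition sqnorm (x : vec) : R := \sum_(s : S) cmod (x s) ^+ 2.
Definition qw_unitary (U : op) : Prop :=
  (forall i j : S, \sum_(k : S) conjc (U k i) * U k j = (i == j)%:R) /\
  (forall i j : S, \sum_(k : S) U i k * conjc (U j k) = (i == j)%:R).
Definition superpos (phi : S -> vec) (a : S -> R[i]) : vec :=
  fun s => \sum_(i : S) a i * phi i s.
Definition Pt (U : op) (beta0 : vec) (t : nat) (v : V) : R :=
  \sum_(a : 'I_d) cmod (iterOp U t beta0 (a, v)) ^+ 2.
Definition Pbar (U : op) (beta0 : vec) (T : nat) (v : V) : R :=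
  T%:R^-1 * \sum_(t < T) Pt U beta0 t v.
Definition Plim (U : op) (beta0 : vec) (v : V) : R :=
  lim ((fun T : nat => Pbar U beta0 T v) @ \oo).
End QW.

Definition tvdist (R : realType) (V : finType) (d1 d2 : V -> R) : R :=
  \sum_(v : V) `|d1 v - d2 v|.

(* Main.v *)
Require Import Defs.
From HB Require Import structures.
From mathcomp Require Import all_boot all_order all_algebra.
From mathcomp Require Import all_classical all_reals all_analysis.
From mathcomp Require Import complex.
Import Order.TTheory GRing.Theory Num.Theory.
Local Open Scope ring_scope.

From mathcomp Require Import ring lra.

Module Helpers.
Import numFieldNormedType.Exports.
Set Implicit Arguments. Unset Strict Implicit.
Section Cm.
Variable R : realType.
Implicit Types x y z : R[i].
Local Open Scope complex_scope.

Lemma cmodE z : (cmod z)%:C = `|z|.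
Proof. by rewrite normc_def; case: z. Qed.
Lemma cmod_ge0 z : 0 <= cmod z.
Proof. exact: sqrtr_ge0. Qed.
Lemma cmodM x y : cmod (x * y) = cmod x * cmod y.
Proof. by apply: complexI; rewrite rmorphM /= !cmodE normrM. Qed.
Lemma cmodD x y : cmod (x + y) <= cmod x + cmod y.
Proof. by rewrite -lecR rmorphD /= !cmodE ler_normD. Qed.
Lemma cmod0 : cmod (0 : R[i]) = 0.
Proof. by apply: complexI; rewrite cmodE normr0. Qed.
Lemma cmodX z n : cmod (z ^+ n) = cmod z ^+ n.
Proof. by apply: complexI; rewrite rmorphXn /= !cmodE normrX. Qed.
Lemma cmodJ z : cmod (conjc z) = cmod z.
Proof. by case: z => x y; rewrite /cmod /= sqrrN. Qed.
Lemma cmod2 z : ((cmod z) ^+ 2)%:C = conjc z * z.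
Proof.
rewrite /cmod sqr_sqrtr ?addr_ge0 ?sqr_ge0 //; case: z => x y /=.
by apply/eqP; rewrite eq_complex /=; apply/andP; split; apply/eqP; ring.
Qed.
Lemma cmod_real (r : R) : cmod r%:C = `|r|.
Proof. by rewrite /cmod /= expr0n /= addr0 sqrtr_sqr. Qed.
Lemma Re_le_cmod z : `|complex.Re z| <= cmod z.
Proof.
case: z => x y; rewrite /cmod /= -sqrtr_sqr; apply: ler_wsqrtr.
by rewrite lerDl sqr_ge0.
Qed.
Lemma cmod_gt0 z : z != 0 -> 0 < cmod z.
Proof. by move=> nz; rewrite -ltcR cmodE normr_gt0. Qed.
Lemma cmod_sum (I : Type) (r : seq I) (P : pred I) (F : I -> R[i]) :
  cmod (\sum_(i <- r | P i) F i) <= \sum_(i <- r | P i) cmod (F i).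
Proof.
elim/big_ind2: _ => [|a b c e H1 H2|i _]; first by rewrite cmod0.
  exact: le_trans (cmodD _ _) (lerD H1 H2).
done.
Qed.
Lemma cmodN z : cmod (- z) = cmod z.
Proof. by apply: complexI; rewrite !cmodE normrN. Qed.
Lemma cmodV z : cmod (z^-1) = (cmod z)^-1.
Proof. by apply: complexI; rewrite fmorphV /= !cmodE normfV. Qed.
Lemma cmod_nat n : cmod (n%:R : R[i]) = n%:R.
Proof. by apply: complexI; rewrite rmorph_nat cmodE normr_nat. Qed.
Lemma cmod1 : cmod (1 : R[i]) = 1.
Proof. by have := cmod_nat 1. Qed.
End Cm.

Unset Implicit Arguments.
Section Main.
Variables (R : realType) (d : nat) (V : finType).
Local Notation S := ('I_d * V)%type.
Variables (U phi : S -> S -> R[i]) (lam a : S -> R[i]).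
Hypothesis Hu : qw_unitary U.
Hypothesis Hon : forall i j, cdot (phi i) (phi j) = (i == j)%:R.
Hypothesis Heig : forall i s, applyOp U (phi i) s = lam i * phi i s.
Local Open Scope complex_scope.

Lemma sum_delta (F : S -> R[i]) k : \sum_l F l * (k == l)%:R = F k.
Proof.
rewrite (bigD1 k) //= eqxx mulr1 big1 ?addr0 // => l /negbTE.
by rewrite eq_sym => ->; rewrite mulr0.
Qed.

Lemma iter_eq t s :
  iterOp U t (superpos phi a) s = \sum_i a i * lam i ^+ t * phi i s.
Proof.
elim: t s => [|t IH] s.
  by rewrite /iterOp /= /superpos; apply: eq_bigr => i _; rewrite expr0 mulr1.
transitivity (\sum_k U s k * iterOp U t (superpos phi a) k); first by [].
under eq_bigr do rewrite IH big_distrr.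
rewrite exchange_big /=; apply: eq_bigr => i _.
transitivity (a i * lam i ^+ t * applyOp U (phi i) s).
  by rewrite /applyOp big_distrr; apply: eq_bigr => k _ /=; ring.
by rewrite Heig exprS; ring.
Qed.

Lemma lam_norm i : conjc (lam i) * lam i = 1.
Proof.
have E : \sum_s conjc (applyOp U (phi i) s) * applyOp U (phi i) s = 1.
  rewrite /applyOp.
  under eq_bigr do rewrite rmorph_sum big_distrl /=.
  under eq_bigr do under eq_bigr do rewrite big_distrr /=.
  rewrite exchange_big /=.
  under eq_bigr do rewrite exchange_big /=.
  transitivity (\sum_k \sum_l conjc (phi i k) * phi i l * (k == l)%:R).
    apply: eq_bigr => k _; apply: eq_bigr => l _.
    rewrite -Hu.1 big_distrr /=; apply: eq_bigr => s _; rewrite rmorphM /=; ring.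
  under eq_bigr do rewrite sum_delta.
  by have := Hon i i; rewrite eqxx.
transitivity (\sum_s conjc (lam i) * lam i * (conjc (phi i s) * phi i s)).
  by rewrite -big_distrr /= -/(cdot _ _) Hon eqxx mulr1.
rewrite -E; apply: eq_bigr => s _; rewrite Heig rmorphM /=; ring.
Qed.

Definition cc i j v := \sum_(x : 'I_d) conjc (phi i (x, v)) * phi j (x, v).
Definition ww i j v := conjc (a i) * a j * cc i j v.
Definition zz i j := conjc (lam i) * lam j.

Lemma Pt_eq t v : (Pt U (superpos phi a) t v)%:C = \sum_i \sum_j ww i j v * zz i j ^+ t.
Proof.
rewrite /Pt rmorph_sum /=.
under eq_bigr do rewrite cmod2 iter_eq rmorph_sum big_distrl /=.
under eq_bigr do under eq_bigr do rewrite big_distrr /=.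
rewrite exchange_big /=; apply: eq_bigr => i _.
rewrite exchange_big /=; apply: eq_bigr => j _.
rewrite /ww /cc big_distrr /= big_distrl /=; apply: eq_bigr => x _.
by rewrite /zz !rmorphM rmorphXn /= exprMn; ring.
Qed.

Definition P0 v := \sum_i \sum_(j | lam i == lam j) ww i j v.
Definition EE (T : nat) v := \sum_i \sum_(j | lam i != lam j)
   ww i j v * (T%:R^-1 * \sum_(t < T) zz i j ^+ t).

Lemma Pbar_eq T v : (0 < T)%N -> (Pbar U (superpos phi a) T v)%:C = P0 v + EE T v.
Proof.
move=> T0; rewrite /Pbar rmorphM fmorphV rmorph_nat rmorph_sum /=.
under eq_bigr do rewrite Pt_eq.
rewrite exchange_big /= big_distrr /= /P0 /EE -big_split /=; apply eq_bigr => i _.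
rewrite exchange_big /= big_distrr /= (bigID (fun j => lam i == lam j)) /=.
congr (_ + _); apply: eq_bigr => j Hj.
  rewrite /zz -(eqP Hj) lam_norm.
  under eq_bigr do rewrite expr1n.
  rewrite -big_distrr /= sumr_const card_ord mulrA -[_ *+ T]mulr_natr mulrC mulrA.
  by rewrite mulrV ?mul1r ?unitfE ?pnatr_eq0 -?lt0n // mulr1.
by rewrite -big_distrr /=; ring.
Qed.

Lemma cmod_lam i : cmod (lam i) = 1.
Proof.
have H : cmod (lam i) ^+ 2 = 1 ^+ 2.
  by rewrite expr1n expr2 -{1}(cmodJ (lam i)) -cmodM lam_norm cmod1.
by apply/eqP; rewrite -(eqrXn2 (n := 2)) ?cmod_ge0 // H.
Qed.

Lemma geom_bound i j (T : nat) : lam i != lam j -> (0 < T)%N ->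
  cmod (T%:R^-1 * \sum_(t < T) zz i j ^+ t) <= 2 / (T%:R * cmod (lam i - lam j)).
Proof.
move=> Hne T0.
have Dpos : 0 < cmod (lam i - lam j) by apply: cmod_gt0; rewrite subr_eq0.
have Hz : zz i j - 1 = conjc (lam i) * - (lam i - lam j).
  by rewrite /zz mulrN mulrBr lam_norm opprB.
have Hc : cmod (zz i j - 1) = cmod (lam i - lam j).
  by rewrite Hz cmodM cmodJ cmod_lam mul1r cmodN.
have Hzn : cmod (zz i j) = 1 by rewrite /zz cmodM cmodJ !cmod_lam mulr1.
have HG : cmod (lam i - lam j) * cmod (\sum_(t < T) zz i j ^+ t) <= 2.
  rewrite -Hc -cmodM -subrX1.
  apply: le_trans (cmodD _ _) _; rewrite cmodX Hzn expr1n cmodN cmod1; lra.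
rewrite cmodM cmodV cmod_nat invfM.
have -> : 2 * ((T%:R)^-1 * (cmod (lam i - lam j))^-1) = (T%:R)^-1 * (2 / cmod (lam i - lam j)) :> R by ring.
apply: ler_wpM2l; first by rewrite invr_ge0 ler0n.
by rewrite ler_pdivlMr // mulrC.
Qed.

Definition Kb v := \sum_i \sum_(j | lam i != lam j) cmod (ww i j v) * (2 / cmod (lam i - lam j)).

Lemma EE_bound T v : (0 < T)%N ->
  cmod (EE T v) <= \sum_i \sum_(j | lam i != lam j)
      cmod (ww i j v) * (2 / (T%:R * cmod (lam i - lam j))).
Proof.
move=> T0; apply: le_trans (cmod_sum _ _ _) _; apply: ler_sum => i _.
apply: le_trans (cmod_sum _ _ _) _; apply: ler_sum => j Hj.
by rewrite cmodM ler_wpM2l ?cmod_ge0 // geom_bound.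
Qed.

Lemma EE_bound2 T v : (0 < T)%N -> cmod (EE T v) <= T%:R^-1 * Kb v.
Proof.
move=> T0; apply: le_trans (EE_bound T v T0) _.
rewrite /Kb big_distrr /=; apply: ler_sum => i _.
rewrite big_distrr /=; apply: ler_sum => j _.
by rewrite invfM le_eqVlt; apply/orP; left; apply/eqP; ring.
Qed.

Lemma ReD (x y : R[i]) : complex.Re (x + y) = complex.Re x + complex.Re y.
Proof. by case: x; case: y. Qed.

Lemma Pbar_Re T v : (0 < T)%N ->
  Pbar U (superpos phi a) T v = complex.Re (P0 v) + complex.Re (EE T v).
Proof. by move=> T0; rewrite -ReD -Pbar_eq. Qed.

Lemma Plim_eq v : Plim U (superpos phi a) v = complex.Re (P0 v).
Proof.
rewrite /Plim; apply: cvg_lim => //; apply/cvgrPdist_le => e e0.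
have K0 : 0 <= Kb v.
  by apply: sumr_ge0 => i _; apply: sumr_ge0 => j _; rewrite mulr_ge0 ?cmod_ge0 // divr_ge0 ?cmod_ge0.
pose N := Num.Def.archi_bound (Kb v / e).
near=> T.
have HT : (N.+1 <= T)%N by near: T; apply: nbhs_infty_ge.
have T0 : (0 < T)%N by apply: leq_trans HT.
rewrite Pbar_Re // opprD addrA subrr sub0r normrN.
apply: le_trans (Re_le_cmod _) _; apply: le_trans (EE_bound2 T v T0) _.
have HN : Kb v / e < N%:R by apply: archi_boundP; rewrite divr_ge0 // ltW.
have HNT : (N%:R : R) <= T%:R by rewrite ler_nat; apply: leq_trans HT.
have Tp : (0 : R) < T%:R by rewrite ltr0n.
rewrite mulrC ler_pdivrMr //.
move: HN; rewrite ltr_pdivrMr // => HN.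
apply: ltW; apply: lt_le_trans HN _; rewrite mulrC; apply: ler_wpM2l => //; exact: ltW.
Unshelve. all: by end_near.
Qed.

Lemma eqle (x y : R) : x = y -> x <= y.
Proof. by move->. Qed.

Lemma sum_pair (G : S -> R) : \sum_v \sum_(x : 'I_d) G (x, v) = \sum_s G s.
Proof. by rewrite exchange_big pair_big /=; apply: eq_bigr => -[x v] _. Qed.

Lemma sum_phi2 i : \sum_s cmod (phi i s) ^+ 2 = 1.
Proof.
apply: complexI; rewrite rmorph_sum rmorph1 /=.
under eq_bigr do rewrite cmod2.
by have := Hon i i; rewrite eqxx.
Qed.

Lemma half2 (x : R) : (x + x) / 2 = x.
Proof. by field. Qed.

Lemma amgm (p q : R) : p * q <= (p ^+ 2 + q ^+ 2) / 2.
Proof. have := sqr_ge0 (p - q); nra. Qed.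

Lemma sum_cc i j : \sum_v cmod (cc i j v) <= 1.
Proof.
apply: le_trans (_ : _ <= \sum_v \sum_(x : 'I_d)
   (cmod (phi i (x, v)) ^+ 2 + cmod (phi j (x, v)) ^+ 2) / 2) _.
  apply: ler_sum => v _; apply: le_trans (cmod_sum _ _ _) _.
  by apply: ler_sum => x _; rewrite cmodM cmodJ amgm.
apply: eqle.
under eq_bigr do rewrite -big_distrl /=.
rewrite -big_distrl /=.
under eq_bigr do rewrite big_split /=.
rewrite big_split /= !(sum_pair (fun s => cmod (phi _ s) ^+ 2)) !sum_phi2.
by rewrite divff // pnatr_eq0.
Qed.

Lemma swap_sum (G : S -> R) (X : S -> S -> R) : (forall i j, X i j = X j i) ->
 \sum_i \sum_(j | lam i != lam j) G j * X i j = \sum_i \sum_(j | lam i != lam j) G i * X i j.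
Proof.
move=> HX; under eq_bigr do rewrite big_mkcond /=.
rewrite exchange_big /=; apply: eq_bigr => j _.
rewrite [RHS]big_mkcond /=; apply: eq_bigr => i _.
by rewrite [lam j == lam i]eq_sym (HX i j).
Qed.

Lemma final T : (0 < T)%N ->
  tvdist (Pbar U (superpos phi a) T) (Plim U (superpos phi a))
  <= 2 * \sum_i \sum_(j | lam i != lam j)
           cmod (a i) ^+ 2 / (T%:R * cmod (lam i - lam j)).
Proof.
move=> T0; rewrite /tvdist.
under eq_bigr do rewrite Plim_eq Pbar_Re // addrAC subrr add0r.
pose X i j := 2 / (T%:R * cmod (lam i - lam j)).
have X0 : forall i j, 0 <= X i j.
  by move=> i j; rewrite /X divr_ge0 // mulr_ge0 ?ler0n ?cmod_ge0.
have XS : forall i j, X i j = X j i.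
  by move=> i j; rewrite /X -opprB cmodN.
apply: le_trans (_ : _ <= \sum_v \sum_i \sum_(j | lam i != lam j)
    cmod (ww i j v) * X i j) _.
  by apply: ler_sum => v _; apply: le_trans (Re_le_cmod _) (EE_bound T v T0).
rewrite exchange_big /=. under eq_bigr do rewrite exchange_big /=.
apply: le_trans (_ : _ <= \sum_i \sum_(j | lam i != lam j)
    (cmod (a i) * cmod (a j)) * X i j) _.
  apply: ler_sum => i _; apply: ler_sum => j _.
  rewrite -big_distrl /=; apply: ler_wpM2r => //.
  under eq_bigr do rewrite /ww !cmodM cmodJ.
  rewrite -big_distrr /= -[X in _ <= X](mulr1 (_ * _)).
  by apply: ler_wpM2l; [rewrite mulr_ge0 ?cmod_ge0 | exact: sum_cc].
apply: le_trans (_ : _ <= \sum_i \sum_(j | lam i != lam j)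
    ((cmod (a i)) ^+ 2 + (cmod (a j)) ^+ 2) / 2 * X i j) _.
  apply: ler_sum => i _; apply: ler_sum => j _.
  by apply: ler_wpM2r => //; exact: amgm.
apply: eqle.
transitivity ((\sum_i \sum_(j | lam i != lam j) (cmod (a i)) ^+ 2 * X i j
   + \sum_i \sum_(j | lam i != lam j) (cmod (a j)) ^+ 2 * X i j) / 2).
  rewrite -big_split /= big_distrl /=; apply: eq_bigr => i _.
  rewrite -big_split /= big_distrl /=; apply: eq_bigr => j _.
  by rewrite mulrDl mulrDl mulrDl; ring.
rewrite (swap_sum (fun j => cmod (a j) ^+ 2) X XS).
rewrite big_distrr /= -big_split /= big_distrl /=; apply: eq_bigr => i _.
rewrite big_distrr /= -big_split /= big_distrl /=; apply: eq_bigr => j _.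
by rewrite half2 /X; ring.
Qed.
End Main.
End Helpers.

Theorem mainTheorem8 (R : realType) (d : nat) (V : finType)
  (U : ('I_d * V)%type -> ('I_d * V)%type -> R[i])
  (phi : ('I_d * V)%type -> ('I_d * V)%type -> R[i])
  (lam : ('I_d * V)%type -> R[i])
  (a : ('I_d * V)%type -> R[i]) (T : nat) :
  qw_unitary U ->
  (forall i j, cdot (phi i) (phi j) = (i == j)%:R) ->
  (forall i s, applyOp U (phi i) s = lam i * phi i s) ->
  sqnorm (superpos phi a) = 1 ->
  (0 < T)%N ->
  tvdist (Pbar U (superpos phi a) T) (Plim U (superpos phi a))
  <= 2 * \sum_(i : ('I_d * V)%type) \sum_(j : ('I_d * V)%type | lam i != lam j)
           cmod (a i) ^+ 2 / (T%:R * cmod (lam i - lam j)).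

Proof.
move=> Hu Hon Heig _ T0.
exact: (Helpers.final _ _ _ _ _ _ _ Hu Hon Heig _ T0).
Qed.
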